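(* Let $r \geq 2$ and let $D=\{d_1<d_2<d_3<\dotsb\}$ be an infinite set of positive integers. If there exist a real number $\delta>0$ and a positive integer $N$ such that $$d_{n+1} \geq \left(2+\frac{1}{r-1}+\delta\right)d_n \quad\text{for all } n \geq N,$$ then $D$ is not $r$-accessible; that is, $\operatorname{doa}(D) \leq r-1$.
   Context: An $r$-coloring of a set $A$ is a function $\chi:A\to\{1,\dots,r\}$. For $D\subseteq\mathbb{N}=\{1,2,3,\dots\}$, a $k$-term $D$-diffsequence is a sequence of integers $x_1,\dots,x_k$ with $x_{i+1}-x_i\in D$ for all $1\le i\le k-1$. A set $D\subseteq\mathbb{N}$ is $r$-accessible if for every $r$-coloring of $\mathbb{N}$ and every $k\ge1$ there is a monochromatic $k$-term $D$-diffsequence in $\mathbb{N}$. The degree of accessibility $\operatorname{doa}(D)$ is the greatest positive integer $r$ for which $D$ is $r$-accessible ($\operatorname{doa}(D)=\infty$ if $D$ is $r$-accessible for all $r$). *)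

(* Defs.v *)
From Stdlib Require Import Reals Lia Lra.

(* A subset of the positive integers is a predicate D : nat -> Prop
   (only its values on positive integers matter; we require D ⊆ N = {1,2,...}). *)

Definition mono_diffseq (D : nat -> Prop) (chi : nat -> nat) (k : nat) : Prop :=
  exists (x : nat -> nat) (c : nat),
    (forall i, 1 <= i <= k -> 1 <= x i /\ chi (x i) = c) /\
    (forall i, 1 <= i < k -> x i < x (S i) /\ D (x (S i) - x i)).

Definition accessible (r : nat) (D : nat -> Prop) : Prop :=
  forall chi : nat -> nat,
    (forall n, 1 <= n -> chi n < r) ->
    forall k, 1 <= k -> mono_diffseq D chi k.

Definition range_from1 (d : nat -> nat) : nat -> Prop :=
  fun m => exists n, 1 <= n /\ d n = m.

(* Main.v *)
Require Import Defs.
From Stdlib Require Import Reals Lia Lra ZArith.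
Open Scope R_scope.

Definition fl (y : R) : Z := (up y - 1)%Z.

Lemma fl_spec y : IZR (fl y) <= y < IZR (fl y) + 1.
Proof. unfold fl; destruct (archimed y) as [H1 H2]; rewrite minus_IZR; simpl; lra. Qed.

Lemma chain_up (u : nat -> R) : (forall k, u k <= u (S k)) -> forall j k, (j <= k)%nat -> u j <= u k.
Proof. intros H j k Hjk; induction Hjk; [lra| specialize (H m); lra]. Qed.

Lemma chain_down (u : nat -> R) : (forall k, u (S k) <= u k) -> forall j k, (j <= k)%nat -> u k <= u j.
Proof. intros H j k Hjk; induction Hjk; [lra| specialize (H m); lra]. Qed.

Fixpoint aseq (e : nat -> R) (c : R) (k : nat) : R :=
  match k with
  | O => c / e O
  | S k => (IZR (up (aseq e c k * e (S k) - c)) + c) / e (S k)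
  end.

Definition Mseq (e : nat -> R) (c : R) (k : nat) : Z :=
  match k with O => 0%Z | S k => up (aseq e c k * e (S k) - c) end.

Lemma exists_alpha (e : nat -> R) (q c U : R) :
  (forall k, 0 < e k) -> (forall k, e (S k) >= q * e k) -> 0 < c < U ->
  (U - c) * (q - 1) >= 1 ->
  exists al, forall k, IZR (Mseq e c k) + c <= e k * al <= IZR (Mseq e c k) + U.
Proof.
  intros He Hq Hc HU.
  set (a := aseq e c). set (b := fun k => a k + (U - c) / e k).
  assert (HM : forall k, e k * a k = IZR (Mseq e c k) + c).
  { intros [|k]; simpl; unfold a; simpl; [pose proof (He O)|pose proof (He (S k))]; field; lra. }
  assert (Hab : forall k, a k <= b k).
  { intro k; unfold b. assert (0 <= (U - c) / e k); [|lra].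
    unfold Rdiv; apply Rmult_le_pos; [lra| apply Rlt_le, Rinv_0_lt_compat, He]. }
  assert (Ha : forall k, a k <= a (S k)).
  { intro k. pose proof (HM (S k)) as H. simpl in H.
    destruct (archimed (a k * e (S k) - c)) as [H1 H2].
    assert (e (S k) * a k <= e (S k) * a (S k)) by (unfold a in *; lra).
    pose proof (He (S k)). nra. }
  assert (Hb : forall k, b (S k) <= b k).
  { intro k. pose proof (HM (S k)) as H. simpl in H.
    destruct (archimed (a k * e (S k) - c)) as [H1 H2].
    pose proof (He k); pose proof (He (S k)); pose proof (Hq k).
    unfold b.
    assert (E1 : e (S k) * (a (S k) + (U - c) / e (S k)) = e (S k) * a (S k) + (U - c)) by (field; lra).
    assert (E2 : e (S k) * (a k + (U - c) / e k) = e (S k) * a k + (U - c) * (e (S k) / e k)) by (field; lra).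
    assert (E3 : e (S k) / e k >= q).
    { apply Rle_ge. apply Rmult_le_reg_r with (e k); [lra|]. unfold Rdiv. rewrite Rmult_assoc, Rinv_l; lra. }
    assert (E4 : (U - c) * (e (S k) / e k) >= (U - c) * q) by (apply Rle_ge, Rmult_le_compat_l; lra).
    apply Rmult_le_reg_l with (e (S k)); [lra|]. rewrite E1, E2.
    unfold a in *. lra. }
  assert (Hall : forall j k, a j <= b k).
  { intros j k. destruct (Nat.le_ge_cases j k).
    - pose proof (chain_up a Ha j k H). pose proof (Hab k). lra.
    - pose proof (chain_down b Hb k j H). pose proof (Hab j). lra. }
  destruct (completeness (fun x => exists k, x = a k)) as [al [Hub Hlub]].
  { exists (b O). intros x [k ->]. apply Hall. }
  { exists (a O); eauto. }
  exists al. intro k.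
  assert (L : a k <= al) by (apply Hub; eauto).
  assert (R' : al <= b k) by (apply Hlub; intros x [j ->]; apply Hall).
  pose proof (He k). pose proof (HM k).
  split.
  - unfold a in *. rewrite <- H0. apply Rmult_le_compat_l; lra.
  - assert (e k * al <= e k * b k) by (apply Rmult_le_compat_l; lra).
    unfold b in H1. replace (e k * (a k + (U - c) / e k)) with (e k * a k + (U - c)) in H1 by (field; lra).
    unfold a in *. lra.
Qed.
Lemma no_access (r : nat) (D : nat -> Prop) (al c U : R) :
  (2 <= r)%nat -> 0 < c -> INR r * U <= INR r - 1 ->
  (forall d, D d -> exists m, IZR m + c <= INR d * al <= IZR m + U) ->
  ~ accessible r D.
Proof.
  intros Hr Hc HU HD acc.
  set (RZ := Z.of_nat r).
  assert (HRZ : (0 < RZ)%Z) by (unfold RZ; lia).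
  assert (HR : INR r = IZR RZ) by (unfold RZ; apply INR_IZR_INZ).
  set (z := fun x : nat => fl (INR r * INR x * al)).
  set (chi := fun x : nat => Z.to_nat (Z.modulo (z x) RZ)).
  assert (Hchi : forall n, (1 <= n)%nat -> (chi n < r)%nat).
  { intros n _. unfold chi. pose proof (Z.mod_pos_bound (z n) RZ HRZ). lia. }
  assert (HRc : 0 < INR r * c) by (apply Rmult_lt_0_compat; [rewrite HR; apply IZR_lt; lia| lra]).
  set (K := Z.to_nat (up (1 / (INR r * c)))).
  assert (HK : INR K * (INR r * c) > 1).
  { destruct (archimed (1 / (INR r * c))) as [H1 _].
    assert (0 < 1 / (INR r * c)) by (unfold Rdiv; rewrite Rmult_1_l; apply Rinv_0_lt_compat; lra).
    assert (0 < IZR (up (1 / (INR r * c)))) by lra.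
    assert (INR K = IZR (up (1 / (INR r * c)))).
    { unfold K. rewrite INR_IZR_INZ. f_equal. apply Z2Nat.id. apply le_IZR. lra. }
    rewrite H2.
    apply Rmult_lt_reg_r with (/ (INR r * c)). apply Rinv_0_lt_compat; lra.
    rewrite Rmult_assoc, Rinv_r, Rmult_1_r, Rmult_1_l by lra.
    unfold Rdiv in H1. lra. }
  destruct (acc chi Hchi (S K) ltac:(lia)) as [x [col [H1 H2]]].
  set (g := fun i => INR r * INR (x i) * al - IZR (z (x i))).
  assert (Hg : forall i, 0 <= g i < 1).
  { intro i. unfold g, z. pose proof (fl_spec (INR r * INR (x i) * al)). lra. }
  assert (Hstep : forall i, (1 <= i < S K)%nat -> g (S i) >= g i + INR r * c).
  { intros i Hi. destruct (H2 i Hi) as [Hlt Hd].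
    destruct (HD _ Hd) as [m [Hm1 Hm2]].
    set (dd := (x (S i) - x i)%nat) in *.
    assert (Hx : INR (x (S i)) = INR (x i) + INR dd) by (unfold dd; rewrite minus_INR by lia; lra).
    assert (Hcol : (z (x i) mod RZ = z (x (S i)) mod RZ)%Z).
    { destruct (H1 i ltac:(lia)) as [_ Ha]. destruct (H1 (S i) ltac:(lia)) as [_ Hb].
      unfold chi in Ha, Hb. rewrite <- Hb in Ha.
      pose proof (Z.mod_pos_bound (z (x i)) RZ HRZ).
      pose proof (Z.mod_pos_bound (z (x (S i))) RZ HRZ). lia. }
    set (z1 := z (x i)) in *. set (z2 := z (x (S i))) in *.
    assert (Ht : (z2 - z1 = RZ * (z2 / RZ - z1 / RZ))%Z).
    { pose proof (Z.div_mod z1 RZ ltac:(lia)). pose proof (Z.div_mod z2 RZ ltac:(lia)). lia. }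
    set (t := (z2 / RZ - z1 / RZ)%Z) in *.
    pose proof (fl_spec (INR r * INR (x i) * al)) as F1.
    pose proof (fl_spec (INR r * INR (x (S i)) * al)) as F2.
    fold (z (x i)) in F1. fold z1 in F1.
    fold (z (x (S i))) in F2. fold z2 in F2.
    rewrite Hx in F2.
    assert (P1 : INR r * (IZR m + c) <= INR r * (INR dd * al)) by (apply Rmult_le_compat_l; [apply pos_INR|lra]).
    assert (P2 : INR r * (INR dd * al) <= INR r * (IZR m + U)) by (apply Rmult_le_compat_l; [apply pos_INR|lra]).
    assert (E1 : INR r * (INR (x i) + INR dd) * al = INR r * INR (x i) * al + INR r * (INR dd * al)) by ring.
    assert (E2 : INR r * (IZR m + U) = INR r * IZR m + INR r * U) by ring.
    assert (E3 : INR r * (IZR m + c) = INR r * IZR m + INR r * c) by ring.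
    assert (Q1 : IZR (z2 - z1) < IZR (RZ * m + RZ)).
    { rewrite minus_IZR, plus_IZR, mult_IZR, <- HR. lra. }
    assert (Q2 : IZR (RZ * m - 1) < IZR (z2 - z1)).
    { rewrite minus_IZR, minus_IZR, mult_IZR, <- HR. lra. }
    apply lt_IZR in Q1. apply lt_IZR in Q2.
    assert (t = m) by nia.
    assert (IZR (z2 - z1) = INR r * IZR m) by (rewrite Ht, mult_IZR, HR; congruence).
    rewrite minus_IZR in H0.
    unfold g. fold z1 z2. rewrite Hx. lra. }
  assert (Hind : forall j, (j <= K)%nat -> g (S j) >= INR j * (INR r * c)).
  { induction j; intro Hj.
    - simpl. pose proof (Hg 1%nat). lra.
    - pose proof (IHj ltac:(lia)). pose proof (Hstep (S j) ltac:(lia)).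
      rewrite S_INR. lra. }
  pose proof (Hind K (le_n _)). pose proof (Hg (S K)). lra.
Qed.
Lemma alg (s delta : R) : 1 <= s -> 0 < delta ->
  (s / (s + 1) - delta / (4 + 2 * delta)) * ((2 + 1 / s + delta) - 1) >= 1.
Proof.
  intros Hs Hd.
  assert (E : (s / (s + 1) - delta / (4 + 2 * delta)) * ((2 + 1 / s + delta) - 1)
     = 1 + delta * s / (s+1) - delta / (4 + 2*delta) * (1 + 1/s + delta)) by (field; lra).
  rewrite E.
  assert (A : delta * s / (s+1) >= delta / 2).
  { unfold Rdiv. apply Rle_ge. rewrite Rmult_assoc. apply Rmult_le_compat_l; [lra|].
    apply Rmult_le_reg_r with (2*(s+1)); [lra|].
    replace (s * / (s+1) * (2*(s+1))) with (2*s) by (field; lra).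
    replace (/2 * (2*(s+1))) with (s+1) by field. lra. }
  assert (B : 1 / s <= 1).
  { unfold Rdiv. rewrite Rmult_1_l. rewrite <- Rinv_1. apply Rinv_le_contravar; lra. }
  assert (C : delta / (4 + 2 * delta) * (1 + 1 / s + delta) <= delta / (4 + 2*delta) * (2 + delta)).
  { apply Rmult_le_compat_l; [|lra]. unfold Rdiv. apply Rmult_le_pos; [lra|].
    apply Rlt_le, Rinv_0_lt_compat; lra. }
  replace (delta / (4 + 2*delta) * (2 + delta)) with (delta/2) in C by (field; lra).
  lra.
Qed.

Theorem theorem1 (r : nat) (d : nat -> nat) :
  (2 <= r)%nat ->
  (1 <= d 1)%nat ->
  (forall n, (1 <= n)%nat -> (d n < d (S n))%nat) ->
  (exists (delta : R) (N : nat), 0 < delta /\ (1 <= N)%nat /\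
     forall n, (N <= n)%nat ->
       INR (d (S n)) >= (2 + 1 / INR (r - 1) + delta) * INR (d n)) ->
  ~ accessible r (range_from1 d).
Proof.
  intros Hr Hd1 Hinc [delta [N [Hdel [HN Hq]]]].
  assert (Hmono : forall i j, (1 <= i <= j)%nat -> (d i <= d j)%nat).
  { intros i j [Hi Hij]. induction Hij; [lia|]. pose proof (Hinc m ltac:(lia)). lia. }
  set (s := INR (r - 1)).
  assert (Hs : 1 <= s) by (unfold s; change 1 with (INR 1); apply le_INR; lia).
  assert (Hrs : INR r = s + 1) by (unfold s; rewrite minus_INR by lia; simpl; lra).
  set (U := s / (s + 1)). set (c' := delta / (4 + 2 * delta)).
  set (e := fun k => INR (d (N + k)%nat)).
  set (q := 2 + 1 / s + delta).
  assert (He : forall k, 0 < e k).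
  { intro k. unfold e. apply lt_0_INR. pose proof (Hmono 1%nat (N+k)%nat ltac:(lia)). lia. }
  assert (Heq : forall k, e (S k) >= q * e k).
  { intro k. unfold e, q, s. rewrite Nat.add_succ_r. apply Hq. lia. }
  assert (Hc : 0 < c' < U).
  { unfold c', U. split.
    - unfold Rdiv. apply Rmult_lt_0_compat; [lra| apply Rinv_0_lt_compat; lra].
    - apply Rlt_le_trans with (1/2).
      + apply Rmult_lt_reg_r with (4 + 2*delta); [lra|].
        unfold Rdiv. rewrite Rmult_assoc, Rinv_l by lra. lra.
      + apply Rmult_le_reg_r with (2*(s+1)); [lra|].
        replace (s / (s+1) * (2*(s+1))) with (2*s) by (field; lra).
        replace (1/2 * (2*(s+1))) with (s+1) by field. lra. }
  destruct (exists_alpha e q c' U He Heq Hc (alg s delta Hs Hdel)) as [al Hal].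
  assert (HD1 : 0 < INR (d 1%nat)) by (apply lt_0_INR; lia).
  assert (HDN : INR (d 1%nat) <= INR (d N)) by (apply le_INR, Hmono; lia).
  apply (no_access r _ al (c' * INR (d 1%nat) / INR (d N)) U Hr).
  - unfold Rdiv. apply Rmult_lt_0_compat; [apply Rmult_lt_0_compat; lra| apply Rinv_0_lt_compat; lra].
  - rewrite Hrs. unfold U. replace ((s + 1) * (s / (s + 1))) with s by (field; lra). lra.
  - intros dd [n [Hn <-]].
    assert (Hcc : c' * INR (d 1%nat) / INR (d N) <= c').
    { apply Rmult_le_reg_r with (INR (d N)); [lra|].
      unfold Rdiv. rewrite Rmult_assoc, Rinv_l by lra. nra. }
    destruct (Nat.le_gt_cases N n) as [HNn | HNn].
    + exists (Mseq e c' (n - N)). destruct (Hal (n - N)%nat) as [A B].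
      unfold e in A, B. replace (N + (n - N))%nat with n in A, B by lia. fold e in A, B. lra.
    + exists 0%Z. destruct (Hal 0%nat) as [A B]. simpl in A, B.
      unfold e in A, B. rewrite Nat.add_0_r in A, B.
      assert (HDn1 : INR (d 1%nat) <= INR (d n)) by (apply le_INR, Hmono; lia).
      assert (HDnN : INR (d n) <= INR (d N)) by (apply le_INR, Hmono; lia).
      assert (Hal0 : 0 <= al) by nra.
      split.
      * apply Rmult_le_reg_r with (INR (d N)); [lra|].
        unfold Rdiv. rewrite Rplus_0_l, Rmult_assoc, Rinv_l by lra. nra.
      * nra.
Qed.
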